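(* Let $\mathbf B_n$ be the $n$-th Bell number. Then $\lim_{n\to\infty}\mathbf B_n/\alpha_n(1\text{-}23\text{-}4)=0$.
   Context: A permutation $\pi=\pi_1\cdots\pi_n$ of $\{1,\dots,n\}$ contains the generalized pattern $1\text{-}23\text{-}4$ if there are indices $a<b<b+1<c$ with $\pi_a<\pi_b<\pi_{b+1}<\pi_c$; otherwise it avoids it. $\alpha_n(1\text{-}23\text{-}4)$ is the number of permutations of $\{1,\dots,n\}$ avoiding it. The Bell number $\mathbf B_n$ is the number of set partitions of an $n$-element set. *)

(* Defs.v *)
From HB Require Import structures.
From mathcomp Require Import all_boot all_order all_algebra all_fingroup.

Set Implicit Arguments. Unset Strict Implicit. Unset Printing Implicit Defensive.

(* s : 'S_n contains 1-23-4: indices a < b, b' = b+1, b' < c with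
   s a < s b < s b' < s c.  (Values 0..n-1 instead of 1..n: relative order
   is all that matters.) *)
Definition contains_1_23_4 (n : nat) (s : 'S_n) : bool :=
  [exists a : 'I_n, exists b : 'I_n, exists b' : 'I_n, exists c : 'I_n,
    [&& (a < b)%N, val b' == (val b).+1, (b' < c)%N,
        (s a < s b)%N, (s b < s b')%N & (s b' < s c)%N]].

Definition avoids_1_23_4 (n : nat) (s : 'S_n) : bool := ~~ contains_1_23_4 s.

Definition alpha_1_23_4 (n : nat) : nat := #|[set s : 'S_n | avoids_1_23_4 s]|.

Definition bell (n : nat) : nat :=
  #|[set P : {set {set 'I_n}} | partition P [set: 'I_n]]|.

(* Main.v *)
Require Import Defs.
From HB Require Import structures.
From mathcomp Require Import all_boot all_order all_algebra all_fingroup.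
From mathcomp Require Import zify.
From mathcomp Require Import zify.
Set Implicit Arguments. Unset Strict Implicit. Unset Printing Implicit Defensive.

Definition ins (p x : nat) (s : seq nat) := take p s ++ x :: drop p s.

Lemma size_ins p x s : size (ins p x s) = (size s).+1.
Proof. by rewrite /ins size_cat /= addnS -size_cat cat_take_drop. Qed.

Lemma perm_ins p x s : perm_eq (ins p x s) (x :: s).
Proof.
rewrite /ins -cat1s perm_catCA /= perm_cons cat_take_drop //.
Qed.

Lemma nth_ins p x s i : p <= size s ->
  nth 0 (ins p x s) i =
  if i < p then nth 0 s i else if i == p then x else nth 0 s i.-1.
Proof.
move=> ps; rewrite /ins nth_cat size_takel //.
case: ltnP => ip; first by rewrite nth_take.
case: eqP => [->|ne]; first by rewrite subnn.
have -> : i - p = (i - p - 1).+1 by lia.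
rewrite /= nth_drop; congr nth; lia.
Qed.

Lemma index_ins p x s : x \notin s -> p <= size s -> index x (ins p x s) = p.
Proof.
move=> xs ps; rewrite /ins index_cat.
have -> : (x \in take p s) = false.
  by apply/negbTE; apply: contra xs; apply: mem_take.
by rewrite size_takel //= eqxx addn0.
Qed.

Lemma filter_ins p x s : x \notin s ->
  filter (predC1 x) (ins p x s) = s.
Proof.
move=> xs; rewrite /ins filter_cat /= eqxx /= -filter_cat cat_take_drop.
apply/all_filterP/allP => y ys /=; apply: contraNneq xs => <-.
by [].
Qed.

Definition dec (s : seq nat) (x : nat) :=
  if index x s is j.+1 then nth 0 s j else x.

Section Build.
Variable lt : rel nat.
Hypothesis ltA : forall a b, lt a b -> lt b a -> False.
Hypothesis ltT : transitive lt.

Definition step (h : nat -> nat) acc i :=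
  ins (if h i == i then 0 else (index (h i) acc).+1) i acc.
Definition build h l := foldl (step h) [::] l.

Lemma build_rcons h l i : build h (rcons l i) = step h (build h l) i.
Proof. by rewrite /build foldl_rcons. Qed.

Lemma perm_build h l : perm_eq (build h l) l.
Proof.
elim/last_ind: l => [|l i IH] //; rewrite build_rcons /step.
by rewrite (permPl (perm_ins _ _ _)) perm_sym perm_rcons perm_cons perm_sym.
Qed.

Definition good1 s := forall a b, a < b -> b.+1 < size s ->
  lt (nth 0 s a) (nth 0 s b) -> lt (nth 0 s b) (nth 0 s b.+1) -> False.
Definition Jinv h s := forall j k, j < k -> k < size s ->
  h (nth 0 s k) = nth 0 s k -> lt (nth 0 s k) (nth 0 s j).

Definition Cnd h l := [/\ uniq l, sorted lt l &
  forall j, j \in l -> [/\ h j \in l, h j = j \/ lt (h j) j & h (h j) = h j]].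

Lemma sorted_rcons_lt l i : sorted lt (rcons l i) -> forall z, z \in l -> lt z i.
Proof.
elim: l => [|a l IH] //= so z; rewrite inE => /orP[/eqP->|zl].
  by move: so; rewrite (path_sortedE ltT) all_rcons => /andP[/andP[]].
by apply: IH => //; move: so; rewrite (path_sortedE ltT) => /andP[].
Qed.

Lemma Cnd_rcons h l i : Cnd h (rcons l i) ->
  [/\ Cnd h l, (forall z, z \in l -> lt z i), i \notin l &
   h i = i \/ (h i \in l /\ h (h i) = h i)].
Proof.
case=> u so H.
have lti := sorted_rcons_lt so.
have il : i \notin l.
  by apply/negP => /lti lii; exact: (ltA lii lii).
split => //.
- split; first by move: u; rewrite rcons_uniq => /andP[].
    by move: so; rewrite -cats1 => /cat_sorted2 [].
  move=> j jl; have jr : j \in rcons l i by rewrite mem_rcons inE jl orbT.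
  have [hl hj hh] := H j jr.
  split => //; move: hl; rewrite mem_rcons inE => /orP[/eqP hi|] //.
  case: hj => [hjj|ltj]; first by move: il; rewrite -hi hjj jl.
  by exfalso; apply: (ltA (lti _ jl)); rewrite -hi.
- have ir : i \in rcons l i by rewrite mem_rcons inE eqxx.
  have [hl hj hh] := H i ir.
  case: hj => [->|lhi]; [by left|right; split => //].
  move: hl; rewrite mem_rcons inE => /orP[/eqP hi|//].
  by move: lhi; rewrite hi => lii; case: (ltA lii lii).
Qed.

Lemma good1_ins s x p : good1 s -> (forall z, z \in s -> lt z x) -> p <= size s ->
  (0 < p -> forall j, j < p.-1 -> lt (nth 0 s p.-1) (nth 0 s j)) ->
  good1 (ins p x s).
Proof.
move=> g mx ps pre a b ab; rewrite size_ins ltnS => bs; rewrite !nth_ins //.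
have memN k : k < size s -> nth 0 s k \in s by move=> ?; apply: mem_nth.
case: (ltngtP b.+1 p) => [b1p|pb1|b1p].
- have -> : a < p by lia. move=> l1 l2; apply: (g a b) => //; lia.
- have [bp|bp] := eqVneq b p.
  + subst b => _ lxN.
    case: (ltA lxN (mx _ (memN _ bs))).
  + rewrite /=.
    case: (ltngtP a p) => [ap|pa|ap].
    * move=> l1 l2; apply: (g a b.-1) => //; try lia.
      by have -> : b.-1.+1 = b by lia.
    * move=> l1 l2; apply: (g a.-1 b.-1) => //; try lia.
      by have -> : b.-1.+1 = b by lia.
    * subst a => l1; exfalso.
      apply: (ltA l1); apply: mx; apply: memN; lia.
- subst p; have -> : a < b.+1 by lia. move=> l1 l2.
  have := pre (ltn0Sn _) a; rewrite /= => /(_ ab) l3.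
  case: (ltA l1 l3).
Qed.

Lemma Jinv_ins h s x p : Jinv h s -> (forall z, z \in s -> lt z x) -> p <= size s ->
  (h x = x -> p = 0) -> Jinv h (ins p x s).
Proof.
move=> J mx ps hx j k jk; rewrite size_ins ltnS => ks; rewrite !nth_ins //.
have memN i : i < size s -> nth 0 s i \in s by move=> ?; apply: mem_nth.
case: (ltngtP k p) => [kp|pk|kp].
- have -> : j < p by lia. move=> hk; apply: (J j k) => //; lia.
- case: (ltngtP j p) => [jp|pj|jp] hk.
  + by apply: (J j k.-1) => //; lia.
  + by apply: (J j.-1 k.-1) => //; lia.
  + apply: mx; apply: memN; lia.
- subst k => /hx p0; lia.
Qed.

Lemma build_good h l : Cnd h l -> good1 (build h l) /\ Jinv h (build h l).
Proof.
elim/last_ind: l => [|l i IH]; first by split => ? ? ? ?.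
move=> /Cnd_rcons [C lti il hi]; have [g J] := IH C.
have pb := perm_build h l.
have mx z : z \in build h l -> lt z i by rewrite (perm_mem pb); apply: lti.
rewrite build_rcons /step.
case: eqP => [hii|hni].
  split; [apply: good1_ins => // | apply: Jinv_ins => //].
case: hi => [//|[hl hh]].
have hb : h i \in build h l by rewrite (perm_mem pb).
have ib : index (h i) (build h l) < size (build h l) by rewrite index_mem.
split; [apply: good1_ins => // | apply: Jinv_ins => //].
move=> _ j jl /=; rewrite nth_index //.
by have := J j (index (h i) (build h l)) jl ib; rewrite nth_index //; apply.
Qed.

Lemma dec_step h acc i : i \notin acc -> (h i = i \/ h i \in acc) ->
  dec (step h acc i) i = h i.
Proof.
move=> ia hi; rewrite /dec /step.
case: eqP => [->|hni]; first by rewrite index_ins.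
have hb : h i \in acc by case: hi.
rewrite index_ins //; last by rewrite index_mem.
rewrite nth_ins; last by rewrite index_mem.
by rewrite ltnSn nth_index.
Qed.

Lemma build_inj h1 h2 l : Cnd h1 l -> Cnd h2 l -> build h1 l = build h2 l ->
  forall j, j \in l -> h1 j = h2 j.
Proof.
elim/last_ind: l => [|l i IH] //.
move=> /Cnd_rcons [C1 _ il hi1] /Cnd_rcons [C2 _ _ hi2].
rewrite !build_rcons => E.
have ib1 : i \notin build h1 l by rewrite (perm_mem (perm_build h1 l)).
have ib2 : i \notin build h2 l by rewrite (perm_mem (perm_build h2 l)).
have E' : build h1 l = build h2 l.
  by have := congr1 (filter (predC1 i)) E; rewrite /step !filter_ins.
move=> j; rewrite mem_rcons inE => /orP[/eqP->|jl]; last by apply: IH.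
have H1 : h1 i = i \/ h1 i \in build h1 l.
  case: hi1 => [|[hl _]]; [by left|right].
  by rewrite (perm_mem (perm_build h1 l)).
have H2 : h2 i = i \/ h2 i \in build h2 l.
  case: hi2 => [|[hl _]]; [by left|right].
  by rewrite (perm_mem (perm_build h2 l)).
by rewrite -(dec_step ib1 H1) -(dec_step ib2 H2) E.
Qed.

End Build.
Definition pat (s : seq nat) := exists a b c, [/\ a < b, b.+1 < c, c < size s &
  [&& nth 0 s a < nth 0 s b, nth 0 s b < nth 0 s b.+1 & nth 0 s b.+1 < nth 0 s c]].

Definition good2 (s : seq nat) := forall b c, b.+1 < c -> c < size s ->
  nth 0 s b < nth 0 s b.+1 -> nth 0 s b.+1 < nth 0 s c -> False.

Lemma good2_rev r : good1 (fun x y => y < x) r -> good2 (rev r).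
Proof.
move=> g b c bc; rewrite size_rev => cs; rewrite !nth_rev; try lia.
have e : (size r - b.+2).+1 = size r - b.+1 by lia.
move=> l1 l2; apply: (g (size r - c.+1) (size r - b.+2)); rewrite /= ?e //; lia.
Qed.

Lemma noF1 p M c : good1 ltn c -> (forall z, z \in c -> z < M) -> p <= size c ->
  ~ pat (ins p M c).
Proof.
move=> g mx pc [a [b [d [ab bd ds /and3P[]]]]]; rewrite size_ins ltnS in ds.
rewrite !nth_ins //.
have memN k : k < size c -> nth 0 c k \in c by move=> ?; apply: mem_nth.
case: (ltngtP b.+1 p) => [b1p|pb1|b1p].
- have -> : a < p by lia. move=> l1 l2 _; apply: (g a b) => //; lia.
- have [bp|bp] := eqVneq b p.
  + subst b => _ lxN; rewrite /= in lxN.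
    have : p < size c by lia.
    by move=> /memN /mx; lia.
  + have -> : d < p = false by lia. have -> : d == p = false by lia.
    case: (ltngtP a p) => [ap|pa|ap].
    * move=> l1 l2 _; apply: (g a b.-1) => //; try lia.
      by have -> : b.-1.+1 = b by lia.
    * move=> l1 l2 _; apply: (g a.-1 b.-1) => //; try lia.
      by have -> : b.-1.+1 = b by lia.
    * subst a => l1; exfalso.
      have : b.-1 < size c by lia.
      by move=> /memN /mx; lia.
- subst p; have -> : a < b.+1 by lia. move=> _ _.
  have -> : d < b.+1 = false by lia. have -> : d == b.+1 = false by lia.
  have : d.-1 < size c by lia.
  by move=> /memN /mx; lia.
Qed.

Lemma noF2 M s t : good1 ltn s -> good2 t ->
  (forall z, z \in s ++ t -> z < M) -> ~ pat (s ++ M :: t).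
Proof.
move=> gs gt mx.
have -> : s ++ M :: t = ins (size s) M (s ++ t).
  by rewrite /ins take_size_cat // drop_size_cat.
move=> [a [b [d [ab bd ds /and3P[]]]]]; rewrite size_ins ltnS in ds.
rewrite !nth_ins ?size_cat ?leq_addr //.
have memN k : k < size (s ++ t) -> nth 0 (s ++ t) k \in s ++ t.
  by move=> ?; apply: mem_nth.
set p := size s.
case: (ltngtP b.+1 p) => [b1p|pb1|b1p].
- have -> : a < p by lia. rewrite !nth_cat.
  have -> : a < p by lia. have -> : b < p by lia. have -> : b.+1 < p by lia.
  move=> l1 l2 _; apply: (gs a b) => //.
- have [bp|bp] := eqVneq b p.
  + subst b => _ lxN; rewrite /= in lxN.
    have : p < size (s ++ t) by rewrite size_cat in ds *; lia.
    by move=> /memN /mx; lia.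
  + have -> : d < p = false by lia. have -> : d == p = false by lia.
    case: (ltngtP a p) => [ap|pa|ap].
    * move=> _ l2 l3; rewrite !nth_cat in l2 l3.
      move: l2 l3; have -> : b.-1 < p = false by lia.
      have -> : b < p = false by lia. have -> : d.-1 < p = false by lia.
      move=> l2 l3; apply: (gt (b.-1 - p) (d.-1 - p)); try lia.
      - rewrite size_cat in ds; lia.
      - by have -> : (b.-1 - p).+1 = b - p by lia.
      - by have -> : (b.-1 - p).+1 = b - p by lia.
    * move=> _ l2 l3; rewrite !nth_cat in l2 l3.
      move: l2 l3; have -> : b.-1 < p = false by lia.
      have -> : b < p = false by lia. have -> : d.-1 < p = false by lia.
      move=> l2 l3; apply: (gt (b.-1 - p) (d.-1 - p)); try lia.
      - rewrite size_cat in ds; lia.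
      - by have -> : (b.-1 - p).+1 = b - p by lia.
      - by have -> : (b.-1 - p).+1 = b - p by lia.
    * subst a => l1; exfalso.
      have : b.-1 < size (s ++ t) by rewrite size_cat in ds *; lia.
      by move=> /memN /mx; lia.
- move=> _ _.
  have -> : d < p = false by lia. have -> : d == p = false by lia.
  have : d.-1 < size (s ++ t) by rewrite size_cat in ds *; lia.
  by move=> /memN /mx; lia.
Qed.
Lemma ltnA a b : a < b -> b < a -> False. Proof. lia. Qed.
Definition gtn' (x y : nat) := y < x.
Lemma gtnA a b : gtn' a b -> gtn' b a -> False. Proof. rewrite /gtn'; lia. Qed.
Lemma gtnT : transitive gtn'. Proof. rewrite /gtn' => ? ? ?; lia. Qed.

Definition fn (s : seq nat) i := nth i s i.
Definition Mv (s : seq nat) := forall i, fn s i <= i /\ fn s (fn s i) = fn s i.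

Lemma fn_nth s i : i < size s -> fn s i = nth 0 s i.
Proof. by move=> ?; rewrite /fn (set_nth_default 0). Qed.

Lemma eq_fn s1 s2 : size s1 = size s2 ->
  (forall i, i < size s1 -> fn s1 i = fn s2 i) -> s1 = s2.
Proof.
move=> e H; apply: (eq_from_nth (x0 := 0)) => // i ii.
by rewrite -fn_nth // H // fn_nth // -e.
Qed.

Definition c1 s := build (fn s) (iota 0 (size s)).

Lemma Cnd_c1 s : Mv s -> Cnd ltn (fn s) (iota 0 (size s)).
Proof.
move=> M; split; [exact: iota_uniq | exact: iota_ltn_sorted|].
move=> j; rewrite mem_iota add0n /= => js; have [l1 l2] := M j.
split => //; first by rewrite mem_iota /=; lia.
by case: (ltngtP (fn s j) j) => h; [right | lia | left].
Qed.

Lemma c1_good s : Mv s -> good1 ltn (c1 s).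
Proof. by move=> M; have [] := build_good ltnA ltn_trans (Cnd_c1 M). Qed.

Lemma perm_c1 s : perm_eq (c1 s) (iota 0 (size s)).
Proof. exact: perm_build. Qed.

Lemma c1_inj s1 s2 : Mv s1 -> Mv s2 -> size s1 = size s2 -> c1 s1 = c1 s2 -> s1 = s2.
Proof.
move=> M1 M2 e E; apply: eq_fn => // i ii.
have C2 := Cnd_c1 M2; rewrite -e in C2.
apply: (build_inj ltnA ltn_trans (Cnd_c1 M1) C2); [by move: E; rewrite /c1 -e | by rewrite mem_iota].
Qed.

Definition seqF1 s p := ins p (size s) (c1 s).

Lemma perm_seqF1 s p : perm_eq (seqF1 s p) (iota 0 (size s).+1).
Proof.
rewrite /seqF1 (permPl (perm_ins _ _ _)) -addn1 iotaD /= add0n.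
by rewrite perm_sym perm_catC /= perm_cons perm_sym perm_c1.
Qed.
Lemma notin_c1 s : size s \notin c1 s.
Proof. by rewrite (perm_mem (perm_c1 s)) mem_iota /= ltnn. Qed.

Lemma seqF1_inj s1 s2 p1 p2 : Mv s1 -> Mv s2 -> size s1 = size s2 ->
  p1 <= size s1 -> p2 <= size s2 -> seqF1 s1 p1 = seqF1 s2 p2 -> s1 = s2 /\ p1 = p2.
Proof.
move=> M1 M2 e l1 l2 E.
have sc s : size (c1 s) = size s by rewrite (perm_size (perm_c1 s)) size_iota.
have ep : p1 = p2.
  have := congr1 (index (size s1)) E; rewrite /seqF1 index_ins ?notin_c1 ?sc //.
  by rewrite e index_ins ?notin_c1 ?sc.
split => //; apply: c1_inj => //.
have := congr1 (filter (predC1 (size s1))) E; rewrite /seqF1 filter_ins ?notin_c1 //.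
by rewrite e filter_ins ?notin_c1.
Qed.

Definition lr (s : seq nat) (R : pred nat) := [seq i <- iota 0 (size s) | R (fn s i)].
Definition lb (s : seq nat) (R : pred nat) :=
  [seq i <- rev (iota 0 (size s)) | ~~ R (fn s i)].
Definition gg (s : seq nat) i := last i [seq j <- iota 0 (size s) | fn s j == fn s i].

Section GG.
Variable s : seq nat.
Hypothesis M : Mv s.
Local Notation m := (size s).

Lemma gg_in i : i < m -> gg s i \in [seq j <- iota 0 m | fn s j == fn s i].
Proof.
move=> im; rewrite /gg; have := mem_last i [seq j <- iota 0 m | fn s j == fn s i].
rewrite inE => /orP[/eqP -> |//]. by rewrite mem_filter eqxx mem_iota.
Qed.

Lemma gg_fn i : i < m -> fn s (gg s i) = fn s i.
Proof. by move=> /gg_in; rewrite mem_filter => /andP[/eqP]. Qed.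

Lemma gg_lt i : i < m -> gg s i < m.
Proof. by move=> /gg_in; rewrite mem_filter mem_iota => /andP[_ /andP[]]. Qed.

Lemma sorted_last_ge (l : seq nat) x d : sorted leq l -> x \in l -> x <= last d l.
Proof.
elim: l d => [|a l IH] d // so; rewrite inE => /orP[/eqP->|xl].
  case: l {IH} so => [|b l] // so.
  have : all (leq a) (b :: l).
    by move: so; rewrite /sorted (path_sortedE leq_trans) => /andP[].
  by move=> /allP H; apply: H; exact: mem_last.
by apply: IH => //; apply: path_sorted so.
Qed.

Lemma gg_ge i : i < m -> i <= gg s i.
Proof.
move=> im; apply: sorted_last_ge.
  by apply: sorted_filter; [exact: leq_trans| exact: iota_sorted].
by rewrite mem_filter eqxx mem_iota.
Qed.

Lemma gg_eq i j : i < m -> j < m -> fn s i = fn s j -> gg s i = gg s j.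
Proof.
move=> im jm e; rewrite /gg e.
have : j \in [seq k <- iota 0 m | fn s k == fn s j] by rewrite mem_filter eqxx mem_iota.
by case: [seq k <- iota 0 m | fn s k == fn s j].
Qed.

Lemma gg_idem i : i < m -> gg s (gg s i) = gg s i.
Proof. by move=> im; apply: gg_eq => //; [apply: gg_lt | apply: gg_fn]. Qed.

End GG.
Definition sig2 s R := build (fn s) (lr s R).
Definition rho2 s R := build (gg s) (lb s R).
Definition seqF2 s R := sig2 s R ++ size s :: rev (rho2 s R).

Lemma Cnd_lr s R : Mv s -> Cnd ltn (fn s) (lr s R).
Proof.
move=> M; split.
- by rewrite filter_uniq // iota_uniq.
- by apply: sorted_filter; [exact: ltn_trans | exact: iota_ltn_sorted].
move=> j; rewrite mem_filter mem_iota /= => /andP[Rj js]; have [l1 l2] := M j.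
split; first by rewrite mem_filter mem_iota /= l2 Rj /=; lia.
  by case: (ltngtP (fn s j) j) => h; [right | lia | left].
by [].
Qed.

Lemma Cnd_lb s R : Mv s -> Cnd gtn' (gg s) (lb s R).
Proof.
move=> M; split.
- by rewrite filter_uniq // rev_uniq iota_uniq.
- apply: sorted_filter; first exact: gtnT.
  by rewrite rev_sorted; exact: iota_ltn_sorted.
move=> j; rewrite mem_filter mem_rev mem_iota /= => /andP[Rj js].
split.
- by rewrite mem_filter mem_rev mem_iota /= gg_fn // Rj gg_lt.
- by case: (ltngtP (gg s j) j) => h; [have := gg_ge js; lia | right | left].
- exact: gg_idem.
Qed.

Lemma perm_sig_rho s R : perm_eq (sig2 s R ++ rev (rho2 s R)) (iota 0 (size s)).
Proof.
set P := (fun i => R (fn s i)).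
apply: (@perm_trans _ (filter P (iota 0 (size s)) ++ filter (predC P) (iota 0 (size s))));
  last by rewrite perm_filterC.
apply: perm_cat; first exact: perm_build.
rewrite perm_rev (permPl (perm_build _ _)) /lb.
by rewrite filter_rev perm_rev.
Qed.

Lemma perm_seqF2 s R : perm_eq (seqF2 s R) (iota 0 (size s).+1).
Proof.
have -> : iota 0 (size s).+1 = iota 0 (size s) ++ [:: size s].
  by rewrite -addn1 iotaD.
rewrite /seqF2 -cat1s perm_catCA /=.
by rewrite perm_sym perm_catC /= perm_cons perm_sym perm_sig_rho.
Qed.

Lemma noF2' s R : Mv s -> ~ pat (seqF2 s R).
Proof.
move=> M; apply: noF2.
- by have [] := build_good ltnA ltn_trans (Cnd_lr R M).
- by apply: good2_rev; have [] := build_good gtnA gtnT (Cnd_lb R M).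
- by move=> z; rewrite (perm_mem (perm_sig_rho s R)) mem_iota.
Qed.

Lemma noF1' s p : Mv s -> p <= size s -> ~ pat (seqF1 s p).
Proof.
move=> M ps; apply: noF1; first exact: c1_good.
- by move=> z; rewrite (perm_mem (perm_c1 s)) mem_iota.
- by rewrite (perm_size (perm_c1 s)) size_iota.
Qed.
Lemma mem_sig2 s R i : i < size s -> (i \in sig2 s R) = R (fn s i).
Proof. by move=> H; rewrite (perm_mem (perm_build _ _)) mem_filter mem_iota /= H andbT. Qed.

Lemma mem_rho2 s R i : i < size s -> (i \in rho2 s R) = ~~ R (fn s i).
Proof.
by move=> H; rewrite (perm_mem (perm_build _ _)) mem_filter mem_rev mem_iota /= H andbT.
Qed.

Lemma blue_le s1 s2 R1 R2 : Mv s1 -> Mv s2 -> size s1 = size s2 ->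
  lb s1 R1 = lb s2 R2 -> (forall j, j \in lb s1 R1 -> gg s1 j = gg s2 j) ->
  forall i, i \in lb s1 R1 -> fn s1 i <= fn s2 i.
Proof.
move=> M1 M2 e elb Hg i il.
have im : i < size s1 by move: il; rewrite mem_filter mem_rev mem_iota => /andP[_ /andP[]].
have il2 : i \in lb s2 R2 by rewrite -elb.
set a := fn s2 i.
have [a1 a2] := M2 i.
have am : a < size s2 by rewrite -e; lia.
have al : a \in lb s1 R1.
  rewrite elb mem_filter mem_rev mem_iota /= am a2.
  by move: il2; rewrite mem_filter => /andP[->].
have E : gg s1 a = gg s1 i.
  rewrite Hg // (gg_eq am (_ : i < size s2)) ?a2 -?e //.
  by rewrite -Hg.
have : fn s1 i = fn s1 a.
  by rewrite -(gg_fn im) -E gg_fn // e.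
have [b1 _] := M1 a; lia.
Qed.

Lemma seqF2_inj s1 s2 R1 R2 : Mv s1 -> Mv s2 -> size s1 = size s2 ->
  seqF2 s1 R1 = seqF2 s2 R2 ->
  s1 = s2 /\ (forall i, i < size s1 -> fn s1 i = i -> R1 i = R2 i).
Proof.
move=> M1 M2 e E.
have lt_m s R z : z \in sig2 s R ++ rev (rho2 s R) -> z < size s.
  by rewrite (perm_mem (perm_sig_rho s R)) mem_iota.
have nsig s R : size s \notin sig2 s R.
  apply/negP => h; have : size s \in sig2 s R ++ rev (rho2 s R) by rewrite mem_cat h.
  by move=> /lt_m; rewrite ltnn.
have idx s R : index (size s) (seqF2 s R) = size (sig2 s R).
  by rewrite /seqF2 index_cat (negbTE (nsig s R)) /= eqxx addn0.
have es : size (sig2 s1 R1) = size (sig2 s2 R2) by rewrite -idx E e idx.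
move: (E); rewrite /seqF2 e => /eqP; rewrite eqseq_cat // => /andP[/eqP Es /eqP Er].
move: Er => [] /(congr1 rev); rewrite !revK => Er.
have elr : lr s1 R1 = lr s2 R2.
  rewrite /lr -e; apply: eq_in_filter => i; rewrite mem_iota /= => im.
  by rewrite -mem_sig2 // Es mem_sig2 // -e.
have elb : lb s1 R1 = lb s2 R2.
  rewrite /lb -e; apply: eq_in_filter => i; rewrite mem_rev mem_iota /= => im.
  by rewrite -mem_rho2 // Er mem_rho2 // -e.
have Hf : forall j, j \in lr s1 R1 -> fn s1 j = fn s2 j.
  apply: (build_inj ltnA ltn_trans (Cnd_lr R1 M1)); first by rewrite elr; exact: Cnd_lr.
  by move: Es; rewrite /sig2 -elr.
have Hg : forall j, j \in lb s1 R1 -> gg s1 j = gg s2 j.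
  apply: (build_inj gtnA gtnT (Cnd_lb R1 M1)); first by rewrite elb; exact: Cnd_lb.
  by move: Er; rewrite /rho2 -elb.
have Hall : forall i, i < size s1 -> fn s1 i = fn s2 i.
  move=> i im; case R1i : (R1 (fn s1 i)).
    by apply: Hf; rewrite mem_filter R1i mem_iota.
  have il : i \in lb s1 R1 by rewrite mem_filter R1i mem_rev mem_iota.
  apply/eqP; rewrite eqn_leq (blue_le M1 M2 e elb Hg il) /=.
  apply: (blue_le M2 M1 (esym e) (esym elb)); last by rewrite -elb.
  by move=> j; rewrite -elb => /Hg ->.
have s12 : s1 = s2 by apply: eq_fn.
split; first exact: s12. move=> i im fi.

have im2 : i < size s2 by move: im; rewrite ?e.
have im1 : i < size s1 by move: im; rewrite -?e.
have h2 := mem_sig2 R2 im2.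
have h1 := mem_sig2 R1 im1.
by rewrite -{1}fi -h1 Es h2 -Hall // fi.
Qed.
Section Fin.
Variable m : nat.
Local Notation n := m.+1.

Definition Mvb (s : seq nat) :=
  all (fun i => (fn s i <= i) && (fn s (fn s i) == fn s i)) (iota 0 (size s)).

Lemma MvbP s : Mvb s -> Mv s.
Proof.
move=> /allP H i; case: (ltnP i (size s)) => isz.
  have ii : i \in iota 0 (size s) by rewrite mem_iota.
  by have /andP[-> /eqP->] := H i ii.
by rewrite /fn !nth_default.
Qed.

Definition Mset : {set m.-tuple 'I_n} := [set t : m.-tuple 'I_n | Mvb (map val t)].
Definition fixv (t : m.-tuple 'I_n) : {set 'I_n} :=
  [set v : 'I_n | (val v < m) && (fn (map val t) v == v)].

Definition mkperm (s : seq nat) : 'S_n :=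
  odflt 1%g [pick p : 'S_n | [forall i, val (p i) == nth 0 s i]].

Lemma mkpermE s : perm_eq s (iota 0 n) -> forall i, val (mkperm s i) = nth 0 s i.
Proof.
move=> ps; rewrite /mkperm; case: pickP => [p /forallP H i | H]; first exact/eqP.
exfalso.
have sz : size s = n by rewrite (perm_size ps) size_iota.
have us : uniq s by rewrite (perm_uniq ps) iota_uniq.
have lt i : nth 0 s i < n.
  case: (ltnP i (size s)) => isz; last by rewrite nth_default.
  by have := mem_nth 0 isz; rewrite (perm_mem ps) mem_iota.
pose f (i : 'I_n) : 'I_n := inord (nth 0 s i).
have fi : injective f.
  move=> i j /(congr1 (@nat_of_ord _)); rewrite /f !inordK // => /eqP.
  by rewrite nth_uniq ?sz // => /eqP /val_inj.
have := H (perm fi); move/negP; apply; apply/forallP => i.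
by rewrite permE /f /= inordK.
Qed.

Lemma mkperm_inj s1 s2 : perm_eq s1 (iota 0 n) -> perm_eq s2 (iota 0 n) ->
  mkperm s1 = mkperm s2 -> s1 = s2.
Proof.
move=> p1 p2 E.
have sz1 : size s1 = n by rewrite (perm_size p1) size_iota.
have sz2 : size s2 = n by rewrite (perm_size p2) size_iota.
apply: (eq_from_nth (x0 := 0)); first by rewrite sz1 sz2.
move=> i; rewrite sz1 => ii.
by rewrite -(mkpermE p1 (Ordinal ii)) -(mkpermE p2 (Ordinal ii)) E.
Qed.

Lemma contains_pat s : perm_eq s (iota 0 n) -> contains_1_23_4 (mkperm s) -> pat s.
Proof.
move=> ps /existsP[a /existsP[b /existsP[b' /existsP[c H]]]].
move: H => /andP[ab /andP[/eqP bb /andP[bc /andP[l1 /andP[l2 l3]]]]].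
rewrite !mkpermE // in l1 l2 l3.
have sz : size s = n by rewrite (perm_size ps) size_iota.
exists a, b, c; split => //.
- by rewrite -bb.
- by rewrite sz.
- by rewrite -bb l1 l2 l3.
Qed.

Definition avoidset := [set p : 'S_n | avoids_1_23_4 p].

Lemma avoid_of s : perm_eq s (iota 0 n) -> ~ pat s -> mkperm s \in avoidset.
Proof.
move=> ps np; rewrite inE /avoids_1_23_4; apply/negP => /(contains_pat ps).
exact: np.
Qed.

End Fin.
Section Fin2.
Variable m : nat.
Local Notation n := m.+1.

Lemma size_mv (t : m.-tuple 'I_n) : size (map val t) = m.
Proof. by rewrite size_map size_tuple. Qed.

Lemma mv_inj (t1 t2 : m.-tuple 'I_n) : map val t1 = map val t2 -> t1 = t2.
Proof. by move=> /(inj_map val_inj) /val_inj. Qed.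

Definition Phi1 (x : m.-tuple 'I_n * 'I_n) : 'S_n :=
  mkperm m (seqF1 (map val x.1) x.2).
Definition Dom1 := [set x : m.-tuple 'I_n * 'I_n | x.1 \in Mset m].

Lemma Mset_Mv (t : m.-tuple 'I_n) : t \in Mset m -> Mv (map val t).
Proof. by rewrite inE => /MvbP. Qed.

Lemma F1_bound : #|Dom1| <= #|avoidset m|.
Proof.
rewrite -(@card_in_imset _ _ Phi1).
  apply: subset_leq_card; apply/subsetP => p /imsetP[[t v] /= tM ->].
  rewrite inE /= in tM; have M := Mset_Mv tM.
  have vs : val v <= size (map val t) by rewrite size_mv -ltnS ltn_ord.
  apply: avoid_of; last exact: noF1'.
  by have P := perm_seqF1 (map val t) v; rewrite size_mv in P; exact: P.
move=> [t1 v1] [t2 v2]; rewrite !inE /= => M1 M2 /mkperm_inj.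
have := perm_seqF1 (map val t1) v1; have := perm_seqF1 (map val t2) v2.
rewrite !size_mv => p2 p1 /(_ p1 p2) E.
have v1s : val v1 <= size (map val t1) by rewrite size_mv -ltnS ltn_ord.
have v2s : val v2 <= size (map val t2) by rewrite size_mv -ltnS ltn_ord.
have e : size (map val t1) = size (map val t2) by rewrite !size_mv.
have [] := seqF1_inj (MvbP M1) (MvbP M2) e v1s v2s E.
by move=> /mv_inj -> /val_inj ->.
Qed.

Definition Rp (R : {set 'I_n}) : pred nat := fun i => (i < n) && (inord i \in R).

Lemma RpE R (v : 'I_n) : Rp R v = (v \in R).
Proof. by rewrite /Rp ltn_ord inord_val. Qed.

Definition Phi2 (x : m.-tuple 'I_n * {set 'I_n}) : 'S_n :=
  mkperm m (seqF2 (map val x.1) (Rp x.2)).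
Definition Dom2 := [set x : m.-tuple 'I_n * {set 'I_n} |
  (x.1 \in Mset m) && (x.2 \subset fixv x.1)].

Lemma F2_bound : #|Dom2| <= #|avoidset m|.
Proof.
rewrite -(@card_in_imset _ _ Phi2).
  apply: subset_leq_card; apply/subsetP => p /imsetP[[t R] /=].
  rewrite inE /= => /andP[tM _] ->.
  have M := Mset_Mv tM.
  apply: avoid_of; last exact: noF2'.
  by have P := perm_seqF2 (map val t) (Rp R); rewrite size_mv in P; exact: P.
move=> [t1 R1] [t2 R2]; rewrite !inE /= => /andP[M1 S1] /andP[M2 S2] /mkperm_inj.
have := perm_seqF2 (map val t1) (Rp R1); have := perm_seqF2 (map val t2) (Rp R2).
rewrite !size_mv => p2 p1 /(_ p1 p2) E.
have e : size (map val t1) = size (map val t2) by rewrite !size_mv.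
have [/mv_inj et HR] := seqF2_inj (MvbP M1) (MvbP M2) e E.
subst t2; congr pair; apply/setP => v.
case vf : (v \in fixv t1).
  move: (vf); rewrite inE => /andP[vm /eqP fv].
  by rewrite -!RpE; apply: HR; rewrite ?size_mv.
have nin (R : {set 'I_n}) : R \subset fixv t1 -> (v \in R) = false.
  by move=> /subsetP SR; apply/negP => /SR; rewrite vf.
by rewrite !nin.
Qed.

End Fin2.
Section Bell.
Variable m : nat.
Local Notation n := m.+1.
Implicit Types P Q : {set {set 'I_n}}.

Definition mf P (i : 'I_n) : 'I_n := [arg min_(j < i in pblock P i) val j].

Section Part.
Variable P : {set {set 'I_n}}.
Hypothesis HP : partition P [set: 'I_n].

Lemma pb_mem x : x \in pblock P x.
Proof. by rewrite mem_pblock (cover_partition HP). Qed.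

Lemma tiP : trivIset P. Proof. exact: partition_trivIset HP. Qed.

Lemma mf_spec i : mf P i \in pblock P i /\ forall j, j \in pblock P i -> val (mf P i) <= val j.
Proof.
rewrite /mf; case: arg_minnP; first exact: pb_mem.
by move=> j jb H; split => // k kb; apply: H.
Qed.

Lemma mf_block x y : pblock P x = pblock P y -> mf P x = mf P y.
Proof.
move=> e; have [a1 a2] := mf_spec x; have [b1 b2] := mf_spec y.
rewrite e in a1 a2; apply: val_inj; apply/eqP; rewrite eqn_leq.
by rewrite a2 // b2 // -e.
Qed.

Lemma mf_same x y : (y \in pblock P x) = (mf P y == mf P x).
Proof.
apply/idP/eqP => [yx|e].
  exact: (mf_block (same_pblock tiP yx)).
have [a1 _] := mf_spec y; have [b1 _] := mf_spec x.
have e1 : pblock P (mf P y) = pblock P y by apply: (same_pblock tiP a1).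
have e2 : pblock P (mf P x) = pblock P x by apply: (same_pblock tiP b1).
by rewrite -e2 -e e1 pb_mem.
Qed.

Lemma mf_le i : val (mf P i) <= val i.
Proof. by have [_ H] := mf_spec i; apply: H; apply: pb_mem. Qed.

Lemma mf_idem i : mf P (mf P i) = mf P i.
Proof. by have [h _] := mf_spec i; apply: (mf_block (same_pblock tiP h)). Qed.

End Part.

Lemma part_eq P Q : partition P [set: 'I_n] -> partition Q [set: 'I_n] ->
  (forall x, mf P x = mf Q x) -> P = Q.
Proof.
move=> HP HQ E.
have eb x : pblock P x = pblock Q x.
  by apply/setP => y; rewrite (mf_same HP) (mf_same HQ) !E.
have sub P1 Q1 : partition P1 [set: 'I_n] -> partition Q1 [set: 'I_n] ->
    (forall x, pblock P1 x = pblock Q1 x) -> P1 \subset Q1.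
  move=> H1 H2 e; apply/subsetP => B BP.
  have /set0Pn[x xB] := partition_neq0 H1 BP.
  rewrite -(def_pblock (partition_trivIset H1) BP xB) e.
  by apply: pblock_mem; rewrite (cover_partition H2).
by apply/eqP; rewrite eqEsubset !sub.
Qed.

Definition tP P : m.-tuple 'I_n := [tuple mf P (widen_ord (leqnSn m) i) | i < m].

Lemma fn_tP P i : i < m -> fn (map val (tP P)) i = val (mf P (inord i)).
Proof.
move=> im; rewrite fn_nth ?size_mv //.
rewrite (nth_map ord0) ?size_tuple //.
have -> : i = Ordinal im by [].
rewrite nth_mktuple; congr (val (mf P _)); apply: val_inj; rewrite /= inordK //.
exact: ltnW.
Qed.

Definition Psi P := (tP P, mf P ord_max).
Definition Dom0 := [set x : m.-tuple 'I_n * 'I_n |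
  (x.1 \in Mset m) && (x.2 \in ord_max |: fixv x.1)].

Lemma bell_bound : bell n <= #|Dom0|.
Proof.
rewrite /bell -(@card_in_imset _ _ Psi).
  apply: subset_leq_card; apply/subsetP => x /imsetP[P].
  rewrite inE => HP -> {x}; rewrite inE /=; apply/andP; split.
    rewrite inE; apply/allP => i; rewrite size_mv mem_iota /= => im.
    rewrite fn_tP //; have := mf_le HP (inord i); rewrite /= inordK; last exact: ltnW im. move=> le.
    rewrite le /= fn_tP; last by apply: leq_ltn_trans le im.
    by rewrite inord_val (mf_idem HP) /=.
  rewrite in_setU1; case: eqP => //= ne; rewrite inE.
  have lt : val (mf P ord_max) < m.
    have := mf_le HP ord_max; rewrite /= leq_eqVlt => /orP[/eqP e|//].
    by case: ne; apply: val_inj.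
  by rewrite lt fn_tP // inord_val (mf_idem HP) /=.
move=> P Q; rewrite !inE => HP HQ E.
have et : tP P = tP Q by exact: (congr1 fst E).
have em : mf P ord_max = mf Q ord_max by exact: (congr1 snd E).
apply: part_eq => // x.
case: (ltnP x m) => xm.
  have := congr1 (fun t : m.-tuple 'I_n => fn (map val t) x) et.
  by rewrite /= !fn_tP // inord_val => /val_inj.
have -> : x = ord_max by apply: val_inj => /=; have := ltn_ord x; lia.
exact: em.
Qed.

End Bell.
Lemma card_dep (I J : finType) (A : pred I) (B : I -> pred J) :
  #|[set x : I * J | A x.1 && B x.1 x.2]| = \sum_(i | A i) #|[set y | B i y]|.
Proof.
rewrite (eq_bigr (fun i => \sum_(j | B i j) 1)); last first.
  by move=> i _; rewrite -sum1_card; apply: eq_bigl => j; rewrite inE.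
rewrite pair_big_dep -sum1_card; apply: eq_bigl => x; rewrite inE.
by case: x.
Qed.

Lemma L1 k : 3 <= k -> k.*2.+1 <= 2 ^ k.
Proof.
elim: k => [|k IH] //; rewrite leq_eqVlt => /orP[/eqP <- //|].
rewrite ltnS => k3; have h := IH k3; rewrite expnS; have : 1 <= 2 ^ k by rewrite expn_gt0.
move: h; rewrite -!muln2; lia.
Qed.

Lemma L2 k : k * k <= 2 ^ k + 1.
Proof.
elim: k => [|k IH] //; case: (ltnP k 3) => k3.
  by case: k k3 {IH} => [|[|[|]]].
have := L1 k3; rewrite expnS -muln2; lia.
Qed.

Lemma pointwise K N k : K * 2 ^ K <= N -> K * k.+1 <= N + 2 ^ k.
Proof.
move=> h; case: (ltnP k (2 ^ K)) => kK.
  apply: leq_trans (leq_addr _ _); apply: leq_trans h; rewrite leq_mul2l.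
  by rewrite kK orbT.
have KK : K < 2 ^ K by apply: ltn_expl.
have h1 : K <= k.-1 by lia.
have h2 : K * k.+1 <= k.-1 * k.+1 by apply: leq_mul.
have := L2 k; nia.
Qed.
Lemma main_ineq K m : K * 2 ^ K <= m.+1 -> K * bell m.+1 <= 2 * alpha_1_23_4 m.+1.
Proof.
move=> hK.
have c0 : #|Dom0 m| = \sum_(t | t \in Mset m) (#|fixv t| + 1).
  rewrite /Dom0 (card_dep (fun t => t \in Mset m) (fun t v => v \in ord_max |: fixv t)).
  apply: eq_bigr => t _; rewrite (eq_card (B := ord_max |: fixv t)); last first.
    by move=> v; rewrite inE.
  rewrite cardsU1 addnC; congr (_ + _).
  by rewrite inE /= ltnn.
have c1 : #|Dom1 m| = \sum_(t | t \in Mset m) m.+1.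
  have -> : Dom1 m = [set x | (x.1 \in Mset m) && (fun t (v : 'I_m.+1) => true) x.1 x.2].
    by apply/setP => x; rewrite !inE andbT.
  rewrite (card_dep (fun t => t \in Mset m) (fun t (v : 'I_m.+1) => true)).
  apply: eq_bigr => t _; rewrite -[RHS](card_ord m.+1); apply: eq_card => v.
  by rewrite inE.
have c2 : #|Dom2 m| = \sum_(t | t \in Mset m) 2 ^ #|fixv t|.
  rewrite /Dom2 (card_dep (fun t => t \in Mset m) (fun t (R : {set 'I_m.+1}) => R \subset fixv t)).
  apply: eq_bigr => t _; rewrite -card_powerset; apply: eq_card => R.
  by rewrite !inE.
have b := bell_bound m; have f1 := F1_bound m; have f2 := F2_bound m.
rewrite c0 in b; rewrite c1 in f1; rewrite c2 in f2.
apply: leq_trans (leq_mul (leqnn K) b) _.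
rewrite big_distrr /=.
apply: leq_trans (_ : \sum_(t | t \in Mset m) (m.+1 + 2 ^ #|fixv t|) <= _).
  by apply: leq_sum => t _; rewrite addn1; apply: pointwise.
rewrite big_split /= mul2n -addnn; apply: leq_add => //.
Qed.
From mathcomp Require Import all_classical all_reals all_analysis.
Import Order.TTheory GRing.Theory Num.Theory numFieldNormedType.Exports.
Unset Implicit Arguments.
Local Open Scope ring_scope.
Local Open Scope classical_set_scope.

Theorem mainTheorem10 (R : realType) :
  (fun n : nat => (bell n)%:R / (alpha_1_23_4 n)%:R : R) @ \oo --> (0 : R).
Proof.
apply/cvgrPdist_le => eps eps0.
set K := Num.bound (2 / eps).
have Kb : 2 / eps < K%:R by apply: archi_boundP; rewrite divr_ge0 // ltW.
have K0 : (0 : R) < K%:R by apply: lt_trans Kb; rewrite divr_gt0.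
exists (K * 2 ^ K)%N.+1 => // n /= hn.
case: n hn => [//|m] hm.
have H := main_ineq (ltnW hm).
rewrite sub0r normrN ger0_norm ?divr_ge0 //.
have [a0|apos] := eqVneq (alpha_1_23_4 m.+1) 0%N.
  by rewrite a0 invr0 mulr0 ltW.
have ap : (0 : R) < (alpha_1_23_4 m.+1)%:R by rewrite ltr0n lt0n.
rewrite ler_pdivrMr //.
have H' : (K%:R * (bell m.+1)%:R : R) <= 2 * (alpha_1_23_4 m.+1)%:R.
  by rewrite -natrM -(natrM R 2) ler_nat.
have Ke : 2 <= K%:R * eps by rewrite -ler_pdivrMr // ltW.
have : K%:R * (bell m.+1)%:R <= K%:R * (eps * (alpha_1_23_4 m.+1)%:R) :> R.
  apply: le_trans H' _; rewrite mulrA.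
  by apply: ler_wpM2r => //; apply: ltW.
by rewrite ler_pM2l.
Qed.
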